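(* Suppose that each of $k_0$ non-defective items and $k_1$ defective items is individually tested $\tilde t$ times (i.e., $\tilde t(k_0+k_1)$ tests in total), where each individual test of an item returns its defectivity status (1 if defective, 0 if not) flipped independently with probability $\rho \in (0,\frac12)$. For any fixed constant $\zeta \in (\rho,1-\rho)$ and any $\delta_0, \delta_1, \epsilon_1 \in (0,1)$, suppose that \[ \tilde t \ge \max\bigg\{ \frac{\log \frac{k_0}{\delta_0}}{ D_2(\zeta \| \rho) }, \frac{\log \frac{1}{\epsilon_1 \delta_1}}{ D_2(\zeta \| 1 - \rho) } \bigg\}. \] Then, if $k_0 = o(k_1)$, for sufficiently large $n$ it holds with probability at least $1-\delta_0-\delta_1$ that the $(1-\epsilon_1)k_1$ items that returned a positive outcome the highest number of times are all defective.
   Context: Logarithms are natural. $D_2(a\|b) = a\log\frac ab + (1-a)\log\frac{1-a}{1-b}$ is the binary relative entropy. The quantities $k_0, k_1$ (and possibly $\delta_0,\delta_1$) may depend on an underlying size parameter $n$, with asymptotics as $n\to\infty$. *)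

(* Defs.v *)
From HB Require Import structures.
From mathcomp Require Import all_boot all_order all_algebra.
From mathcomp Require Import all_classical all_reals all_analysis.
Set Implicit Arguments. Unset Strict Implicit. Unset Printing Implicit Defensive.
Import Order.TTheory GRing.Theory Num.Theory.
Local Open Scope ring_scope.

Definition D2 {R : realType} (a b : R) : R :=
  a * ln (a / b) + (1 - a) * ln ((1 - a) / (1 - b)).

(* Items are 'I_(k0 + k1); the first k0 are non-defective, the last k1 defective. *)
Definition defective (k0 k1 : nat) (i : 'I_(k0 + k1)) : bool := (k0 <= i)%N.

Definition outcome (k0 k1 t : nat) := {ffun 'I_(k0 + k1) * 'I_t -> bool}.

Definition outcome_prob {R : realType} (rho : R) (k0 k1 t : nat)
    (w : outcome k0 k1 t) : R :=
  \prod_(p : 'I_(k0 + k1) * 'I_t)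
     (if w p == defective p.1 then 1 - rho else rho).

Definition pos_count (k0 k1 t : nat) (w : outcome k0 k1 t) (i : 'I_(k0 + k1)) : nat :=
  (\sum_(j < t) (w (i, j) : nat))%N.

(* The success event: every set S of ceil((1 - eps1) k1) items that returned a
   positive outcome the highest number of times (i.e. every item of S has at
   least as many positives as every item outside S; any tie-breaking) consists
   of defective items only. *)
Definition top_all_defective {R : realType} (eps1 : R) (k0 k1 t : nat)
    (w : outcome k0 k1 t) : Prop :=
  forall S : {set 'I_(k0 + k1)},
    (#|S|%:R - 1 < (1 - eps1) * k1%:R) -> ((1 - eps1) * k1%:R <= #|S|%:R) ->
    (forall i j, i \in S -> j \notin S -> (pos_count w j <= pos_count w i)%N) ->
    forall i, i \in S -> defective i.

Definition success_prob {R : realType} (rho eps1 : R) (k0 k1 t : nat) : R :=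
  \sum_(w : outcome k0 k1 t | `[< top_all_defective eps1 w >]) outcome_prob rho w.

(* Main.v *)
Require Import Defs.
From HB Require Import structures.
From mathcomp Require Import all_boot all_order all_algebra.
From mathcomp Require Import all_classical all_reals all_analysis.
From mathcomp Require Import ring lra.
Import Order.TTheory GRing.Theory Num.Theory.
Local Open Scope classical_set_scope.
Local Open Scope ring_scope.
Set Implicit Arguments. Unset Strict Implicit. Unset Printing Implicit Defensive.

Definition fac {R : realType} (rho : R) k0 k1 t (p : 'I_(k0 + k1) * 'I_t) (b : bool) : R :=
  if b == defective p.1 then 1 - rho else rho.

Lemma expect_prod (R : realType) (rho : R) k0 k1 t (F : 'I_(k0+k1)*'I_t -> bool -> R) :
  \sum_(w : outcome k0 k1 t) outcome_prob rho w * \prod_(p : 'I_(k0+k1)*'I_t) F p (w p) =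
  \prod_(p : 'I_(k0+k1)*'I_t) (\sum_(b : bool) fac rho p b * F p b).
Proof.
rewrite bigA_distr_bigA /=; apply: eq_bigr => w _.
by rewrite /outcome_prob -big_split.
Qed.

Lemma total_prob (R : realType) (rho : R) k0 k1 t :
  \sum_(w : outcome k0 k1 t) outcome_prob rho w = 1.
Proof.
transitivity (\sum_(w : outcome k0 k1 t) outcome_prob rho w * \prod_(p : 'I_(k0+k1)*'I_t) (fun _ _ => 1 : R) p (w p)).
  by apply: eq_bigr => w _; rewrite big1 ?mulr1.
rewrite (expect_prod rho (fun _ _ => 1)) big1 // => p _.
rewrite big_bool /fac; case: (defective p.1) => /=; rewrite !mulr1; lra.
Qed.

Lemma outcome_prob_ge0 (R : realType) (rho : R) k0 k1 t (w : outcome k0 k1 t) :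
  0 <= rho <= 1 -> 0 <= outcome_prob rho w.
Proof.
move=> /andP[h0 h1]; apply: prodr_ge0 => p _; case: ifP => _; lra.
Qed.

Lemma prod_row (R : realType) (I J : finType) (H : I * J -> R) (i : I) :
  (forall p : I * J, p.1 != i -> H p = 1) -> \prod_(p : I * J) H p = \prod_(j : J) H (i, j).
Proof.
move=> H1.
transitivity (\prod_(p : I * J) H (p.1, p.2)); first by apply: eq_bigr => -[].
rewrite -(pair_bigA _ (fun a b => H (a, b))) (bigD1 i) //= [X in _ * X]big1 ?mulr1 // => i' ne.
by apply: big1 => j _; apply: H1.
Qed.

Definition err k0 k1 t (w : outcome k0 k1 t) (i : 'I_(k0 + k1)) : nat :=
  (\sum_(j < t) (w (i, j) != defective i : nat))%N.

Lemma chernoff_val (R : realType) (rho a : R) :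
  0 < rho -> rho < a -> a < 1 ->
  let s := ln (a / rho) - ln ((1 - a) / (1 - rho)) in
  0 <= s /\ rho * expR (s * (1 - a)) + (1 - rho) * expR (s * (0 - a)) = expR (- D2 a rho).
Proof.
move=> r0 ra a1 s.
have r1 : rho < 1 by lra.
have p1 : 0 < a / rho by apply: divr_gt0; lra.
have p2 : 0 < (1 - a) / (1 - rho) by apply: divr_gt0; lra.
split.
  rewrite /s subr_ge0; apply: (@le_trans _ _ 0).
    by apply: ln_le0; rewrite ler_pdivrMr; lra.
  by apply: ln_ge0; rewrite ler_pdivlMr; lra.
have es : expR s = (a / rho) / ((1 - a) / (1 - rho)).
  by rewrite /s expRD expRN !lnK.
have -> : s * (1 - a) = s + - (s * a) by ring.
have -> : s * (0 - a) = - (s * a) by ring.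
have -> : - D2 a rho = - (s * a) + - ln ((1 - a) / (1 - rho)).
  by rewrite /D2 /s; ring.
rewrite [expR (s + _)]expRD es [RHS]expRD [expR (- ln _)]expRN lnK //.
field; lra.
Qed.

Lemma chernoff_bnd (R : realType) (rho a : R) k0 k1 t (i : 'I_(k0 + k1)) :
  0 < rho -> rho < a -> a < 1 ->
  \sum_(w : outcome k0 k1 t) outcome_prob rho w * ((a * t%:R <= (err w i)%:R)%R : nat)%:R
    <= expR (- D2 a rho) ^+ t.
Proof.
move=> r0 ra a1.
have [s0 hv] := chernoff_val r0 ra a1.
move: s0 hv; set s := ln _ - ln _ => s0 hv.
pose G := fun (p : 'I_(k0 + k1) * 'I_t) (b : bool) =>
  if p.1 == i then expR (s * ((b != defective p.1)%:R - a)) else 1.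
apply: (@le_trans _ _ (\sum_(w : outcome k0 k1 t) outcome_prob rho w *
                       \prod_(p : 'I_(k0 + k1) * 'I_t) G p (w p))).
  apply: ler_sum => w _; apply: ler_wpM2l; first by apply: outcome_prob_ge0; lra.
  rewrite (@prod_row _ _ _ (fun p => G p (w p)) i); last by move=> p /negbTE; rewrite /G => ->.
  rewrite /G /= eqxx -expR_sum.
  have -> : \sum_(j < t) s * ((w (i, j) != defective i)%:R - a) = s * ((err w i)%:R - a * t%:R).
    rewrite -mulr_sumr sumrB /err natr_sum sumr_const card_ord; congr (_ * (_ - _)).
    by rewrite mulr_natr.
  case: (boolP (a * t%:R <= (err w i)%:R)) => h /=; rewrite ?mulr1n ?mulr0n.
    by rewrite -[X in X <= _]expR0 ler_expR mulr_ge0 // subr_ge0.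
  exact/ltW/expR_gt0.
rewrite (expect_prod rho G) (@prod_row _ _ _ _ i); last first.
  move=> p /negbTE h; rewrite /G h big_bool /fac; case: (defective p.1) => /=; lra.
rewrite (eq_bigr (fun _ => expR (- D2 a rho))) ?prodr_const ?card_ord // => j _.
rewrite big_bool /fac /G /= eqxx; case: (defective i) => /=; rewrite ?mulr0n ?mulr1n -hv; lra.
Qed.

Lemma ln_lt_sub1 (R : realType) (y : R) : 0 < y -> y != 1 -> ln y < y - 1.
Proof.
move=> y0 y1.
have hl : ln y != 0.
  apply/eqP => h; move/eqP: y1; apply; by rewrite -(lnK y0) h expR0.
have := expR_gt1Dx hl; rewrite lnK //; lra.
Qed.

Lemma ln_le_sub1 (R : realType) (y : R) : 0 < y -> ln y <= y - 1.
Proof.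
move=> y0; have [->|y1] := eqVneq y 1; first by rewrite ln1; lra.
exact/ltW/ln_lt_sub1.
Qed.

Lemma D2_gt0 (R : realType) (a b : R) : 0 < a < 1 -> 0 < b < 1 -> a != b -> 0 < D2 a b.
Proof.
move=> /andP[a0 a1] /andP[b0 b1] ab.
have q1 : 0 < b / a by apply: divr_gt0.
have q2 : 0 < (1 - b) / (1 - a) by apply: divr_gt0; lra.
have q3 : 0 < a / b by apply: divr_gt0.
have q4 : 0 < (1 - a) / (1 - b) by apply: divr_gt0; lra.
have e1 : ln (a / b) = - ln (b / a) by rewrite -lnV ?invf_div.
have e2 : ln ((1 - a) / (1 - b)) = - ln ((1 - b) / (1 - a)) by rewrite -lnV ?invf_div.
have ba : b / a != 1.
  apply: contraNneq ab => h; apply/eqP; move: h; rewrite -[X in _ = X -> _](divff (lt0r_neq0 a0)).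
  by move/(mulIf (invr_neq0 (lt0r_neq0 a0))) => ->.
have h1 : a * ln (b / a) < a * (b / a - 1) by rewrite ltr_pM2l // ln_lt_sub1.
have h2 : (1 - a) * ln ((1 - b) / (1 - a)) <= (1 - a) * ((1 - b) / (1 - a) - 1).
  by rewrite ler_pM2l ?ln_le_sub1 //; lra.
have f1 : a * (b / a - 1) = b - a by field; lra.
have f2 : (1 - a) * ((1 - b) / (1 - a) - 1) = a - b by field; lra.
rewrite /D2 e1 e2; lra.
Qed.

Lemma D2_flip (R : realType) (a b : R) : D2 a (1 - b) = D2 (1 - a) b.
Proof.
rewrite /D2 (_ : 1 - (1 - b) = b); last by ring.
rewrite (_ : 1 - (1 - a) = a); last by ring.
rewrite addrC; congr (_ + _); ring.
Qed.

Lemma cnt_err_def k0 k1 t (w : outcome k0 k1 t) i :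
  defective i -> (pos_count w i + err w i = t)%N.
Proof.
move=> d; rewrite /pos_count /err d -big_split /=.
rewrite (eq_bigr (fun _ => 1%N)) ?sum1_card ?card_ord // => j _.
by case: (w (i, j)).
Qed.

Lemma cnt_err_ndef k0 k1 t (w : outcome k0 k1 t) i :
  ~~ defective i -> pos_count w i = err w i.
Proof.
move=> /negbTE d; rewrite /pos_count /err d.
by apply: eq_bigr => j _; case: (w (i, j)).
Qed.

Definition aa {R : realType} (zeta : R) k0 k1 (i : 'I_(k0 + k1)) : R :=
  if defective i then 1 - zeta else zeta.

Definition Ev {R : realType} (zeta : R) k0 k1 t (w : outcome k0 k1 t) i : bool :=
  (aa zeta i * t%:R <= (err w i)%:R)%R.

Definition cc {R : realType} (eps1 : R) k0 k1 (i : 'I_(k0 + k1)) : R :=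
  if defective i then (eps1 * k1%:R)^-1 else 1.

Definition BB {R : realType} (zeta eps1 : R) k0 k1 t (w : outcome k0 k1 t) : R :=
  \sum_i cc eps1 i * (Ev zeta w i : nat)%:R.

Lemma def_lshift k0 k1 (i : 'I_k0) : defective (lshift k1 i) = false.
Proof. by rewrite /defective /= leqNgt ltn_ord. Qed.

Lemma def_rshift k0 k1 (i : 'I_k1) : defective (rshift k0 i) = true.
Proof. by rewrite /defective /= leq_addr. Qed.

Lemma key (R : realType) (zeta eps1 : R) k0 k1 t (w : outcome k0 k1 t) :
  0 < eps1 -> BB zeta eps1 w < 1 -> top_all_defective eps1 w.
Proof.
move=> e0 Bl S hS1 hS2 htop j jS; case: (boolP (defective j)) => // ndj.
have c0 : forall i : 'I_(k0 + k1), 0 <= cc eps1 i.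
  move=> i; rewrite /cc; case: ifP => _ //; rewrite invr_ge0 mulr_ge0 //; lra.
have t0 : forall i : 'I_(k0 + k1), 0 <= cc eps1 i * (Ev zeta w i : nat)%:R.
  by move=> i; rewrite mulr_ge0.
have nEj : ~~ Ev zeta w j.
  apply/negP => Ej; move: Bl; rewrite /BB (bigD1 j) //=.
  have cj : cc eps1 j = 1 by rewrite /cc (negbTE ndj).
  rewrite Ej cj /= mulr1n mulr1.
  have : 0 <= \sum_(i | i != j) cc eps1 i * (Ev zeta w i : nat)%:R.
    by apply: sumr_ge0 => i _; exact: t0.
  lra.
have F3 : forall i : 'I_(k0 + k1), defective i -> ~~ Ev zeta w i -> i \in S.
  move=> i di nEi; case: (boolP (i \in S)) => // niS.
  have := htop j i jS niS; rewrite -(ler_nat R).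
  have := cnt_err_def w di; move/(congr1 (fun n => n%:R : R)); rewrite natrD => e1.
  move: nEj nEi; rewrite /Ev /aa (negbTE ndj) di (cnt_err_ndef w ndj) -!ltNge; lra.
have cardS : #|S|%:R = \sum_i ((i \in S) : nat)%:R :> R.
  rewrite -sum1_card big_mkcond /= natr_sum; apply: eq_bigr => i _.
  by case: (i \in S).
have lowS : \sum_i ((i == j) : nat)%:R + \sum_i ((defective i && ~~ Ev zeta w i) : nat)%:R
    <= #|S|%:R :> R.
  rewrite cardS -big_split; apply: ler_sum => i _.
  case: (eqVneq i j) => [->|nij].
    by rewrite jS (negbTE ndj) /= ?mulr1n ?mulr0n; lra.
  case: (boolP (defective i && ~~ Ev zeta w i)) => [/andP[di nEi]|_].
    by rewrite (F3 i di nEi) /= ?mulr1n ?mulr0n; lra.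
  by rewrite /= ?mulr1n ?mulr0n add0r; case: (i \in S); rewrite /= ?mulr1n ?mulr0n; lra.
have sj : \sum_i ((i == j) : nat)%:R = 1 :> R.
  by rewrite (bigD1 j) //= eqxx big1 ?addr0 // => i /negbTE ->.
pose X : R := \sum_(i < k1) ((Ev zeta w (rshift k0 i)) : nat)%:R.
have sd : \sum_i ((defective i && ~~ Ev zeta w i) : nat)%:R = k1%:R - X :> R.
  rewrite big_split_ord /= big1 ?add0r; last by move=> i _; rewrite def_lshift.
  rewrite /X (_ : k1%:R = \sum_(i < k1) (1 : R)); last by rewrite sumr_const card_ord.
  rewrite -sumrB; apply: eq_bigr => i _.
  by rewrite def_rshift /=; case: (Ev zeta w _); rewrite /= ?mulr1n ?mulr0n; ring.
have BX : (eps1 * k1%:R)^-1 * X <= BB zeta eps1 w.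
  rewrite /BB big_split_ord /= /X mulr_sumr.
  have : 0 <= \sum_(i < k0) cc eps1 (lshift k1 i) * (Ev zeta w (lshift k1 i) : nat)%:R.
    by apply: sumr_ge0 => i _; exact: t0.
  have -> : \sum_(i < k1) cc eps1 (rshift k0 i) * (Ev zeta w (rshift k0 i) : nat)%:R =
            \sum_(i < k1) (eps1 * k1%:R)^-1 * (Ev zeta w (rshift k0 i) : nat)%:R.
    by apply: eq_bigr => i _; rewrite /cc def_rshift.
  lra.
have Xle : X <= k1%:R.
  rewrite /X (_ : k1%:R = \sum_(i < k1) (1 : R)); last by rewrite sumr_const card_ord.
  apply: ler_sum => i _.
  by case: (Ev zeta w _); rewrite /= ?mulr1n ?mulr0n; lra.
have Xgt : eps1 * k1%:R < X.
  rewrite sj sd in lowS.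
  have : k1%:R - X < (1 - eps1) * k1%:R by lra.
  have -> : (1 - eps1) * k1%:R = k1%:R - eps1 * k1%:R by ring.
  lra.
have k1p : 0 < k1%:R :> R.
  rewrite lt_neqAle ler0n andbT; apply/eqP => h.
  rewrite -h mulr0 in Xgt; rewrite -h in Xle; lra.
have pp : 0 < eps1 * k1%:R by apply: mulr_gt0.
have : (eps1 * k1%:R)^-1 * X < 1 by apply: le_lt_trans Bl.
rewrite mulrC ltr_pdivrMr // mul1r; lra.
Qed.

Lemma tail_bound (R : realType) (D y : R) t :
  0 < D -> 0 < y -> ln y / D <= t%:R -> expR (- D) ^+ t <= y^-1.
Proof.
move=> D0 y0; rewrite ler_pdivrMr // => h.
rewrite -expRM_natl -(lnK y0) -expRN ler_expR; lra.
Qed.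

Lemma fixed_n (R : realType) (rho zeta eps1 : R) k0 k1 t (d0 d1 : R) :
  0 < rho < 2^-1 ->
  rho < zeta < 1 - rho ->
  0 < eps1 < 1 ->
  0 < d0 < 1 -> 0 < d1 < 1 ->
  ln (k0%:R / d0) / D2 zeta rho <= t%:R ->
  ln ((eps1 * d1)^-1) / D2 zeta (1 - rho) <= t%:R ->
  1 - d0 - d1 <= success_prob rho eps1 k0 k1 t.
Proof.
move=> /andP[r0 r2] /andP[rz z1] /andP[e0 e1] /andP[d00 d01] /andP[d10 d11] h0 h1.
have h2 : 2^-1 < (1 : R) by rewrite invf_lt1 // ltr1n.
have r1 : rho < 1 by lra.
have P0 : forall w : outcome k0 k1 t, 0 <= outcome_prob rho w.
  by move=> w; apply: outcome_prob_ge0; lra.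
have c0 : forall i : 'I_(k0 + k1), 0 <= cc eps1 i.
  move=> i; rewrite /cc; case: ifP => _ //; rewrite invr_ge0 mulr_ge0 //; lra.
have B0 : forall w : outcome k0 k1 t, 0 <= BB zeta eps1 w.
  by move=> w; apply: sumr_ge0 => i _; rewrite mulr_ge0.
have tot := total_prob rho k0 k1 t.
rewrite (bigID (fun w => `[< top_all_defective eps1 w >])) /= in tot.
rewrite /success_prob.
set Sg := \sum_(w | `[< _ >]) _ in tot *.
set Sb := \sum_(w | ~~ `[< _ >]) _ in tot.
suff : Sb <= d0 + d1 by lra.
apply: (@le_trans _ _ (\sum_(w : outcome k0 k1 t) outcome_prob rho w * BB zeta eps1 w)).
  rewrite [X in _ <= X](bigID (fun w => `[< top_all_defective eps1 w >])) /=.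
  have : 0 <= \sum_(w : outcome k0 k1 t | `[< top_all_defective eps1 w >]) outcome_prob rho w * BB zeta eps1 w.
    by apply: sumr_ge0 => w _; rewrite mulr_ge0.
  have : Sb <= \sum_(w : outcome k0 k1 t | ~~ `[< top_all_defective eps1 w >]) outcome_prob rho w * BB zeta eps1 w.
    apply: ler_sum => w /asboolPn ns.
    have B1 : 1 <= BB zeta eps1 w.
      rewrite leNgt; apply/negP => h; apply: ns; exact: key e0 h.
    have := P0 w; nra.
  lra.
rewrite /BB.
have -> : \sum_(w : outcome k0 k1 t) outcome_prob rho w *
            (\sum_i cc eps1 i * (Ev zeta w i : nat)%:R) =
          \sum_i cc eps1 i * \sum_(w : outcome k0 k1 t) outcome_prob rho w * (Ev zeta w i : nat)%:R.
  under eq_bigr => w _ do rewrite mulr_sumr.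
  rewrite exchange_big; apply: eq_bigr => i _; rewrite mulr_sumr; apply: eq_bigr => w _.
  by rewrite mulrCA.
apply: (@le_trans _ _ (\sum_i cc eps1 i * expR (- D2 (aa zeta i) rho) ^+ t)).
  apply: ler_sum => i _; apply: ler_wpM2l => //; have ha : rho < aa zeta i < 1 by rewrite /aa; case: ifP => _; apply/andP; split; lra.
  case/andP: ha => ha1 ha2; exact: (@chernoff_bnd R rho (aa zeta i) k0 k1 t i r0 ha1 ha2).
rewrite big_split_ord /=.
rewrite (eq_bigr (fun _ => expR (- D2 zeta rho) ^+ t)); last first.
  by move=> i _; rewrite /cc /aa def_lshift mul1r.
rewrite [X in _ + X](eq_bigr (fun _ => (eps1 * k1%:R)^-1 * expR (- D2 (1 - zeta) rho) ^+ t)); last first.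
  by move=> i _; rewrite /cc /aa def_rshift.
rewrite !sumr_const !card_ord.
have D0 : 0 < D2 zeta rho.
  apply: D2_gt0; rewrite ?gt_eqF //; apply/andP; split; lra.
have D1 : 0 < D2 (1 - zeta) rho.
  apply: D2_gt0; rewrite ?gt_eqF //; try (apply/andP; split); lra.
rewrite D2_flip in h1.
apply: lerD.
  rewrite -(mulr_natl (expR _ ^+ t)).
  case: (posnP k0) => [k00|k0p].
    by rewrite k00 mul0r; lra.
  have k0r : 0 < k0%:R :> R by rewrite ltr0n.
  have := tail_bound D0 (divr_gt0 k0r d00) h0 => hb.
  apply: (@le_trans _ _ (k0%:R * (k0%:R / d0)^-1)).
    by apply: ler_wpM2l => //; rewrite ler0n.
  rewrite invf_div (_ : _ * _ = d0) ?lexx //; field; lra.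
rewrite -(mulr_natl ((eps1 * k1%:R)^-1 * _)).
case: (posnP k1) => [k10|k1p].
  by rewrite k10 mul0r; lra.
have k1r : 0 < k1%:R :> R by rewrite ltr0n.
have ed : 0 < (eps1 * d1)^-1 by rewrite invr_gt0 mulr_gt0.
have := tail_bound D1 ed h1; rewrite invrK => hb.
apply: (@le_trans _ _ (k1%:R * ((eps1 * k1%:R)^-1 * (eps1 * d1)))).
  apply: ler_wpM2l; first by rewrite ler0n.
  by apply: ler_wpM2l => //; rewrite invr_ge0 mulr_ge0 //; lra.
rewrite (_ : k1%:R * ((eps1 * k1%:R)^-1 * (eps1 * d1)) = d1) ?lexx //; field; apply/andP; split; lra.
Qed.

Unset Implicit Arguments.

Theorem lemma5 (R : realType) (rho zeta eps1 : R) (k0 k1 t : nat -> nat)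
    (delta0 delta1 : nat -> R) :
  0 < rho < 2^-1 ->
  rho < zeta < 1 - rho ->
  0 < eps1 < 1 ->
  (forall n, 0 < delta0 n < 1) ->
  (forall n, 0 < delta1 n < 1) ->
  (forall n, ln ((k0 n)%:R / delta0 n) / D2 zeta rho <= (t n)%:R) ->
  (forall n, ln ((eps1 * delta1 n)^-1) / D2 zeta (1 - rho) <= (t n)%:R) ->
  (* k0 = o(k1) *)
  (forall e : R, 0 < e -> \forall n \near \oo, (k0 n)%:R <= e * (k1 n)%:R) ->
  \forall n \near \oo,
    1 - delta0 n - delta1 n <= success_prob rho eps1 (k0 n) (k1 n) (t n).
Proof.
move=> hr hz he hd0 hd1 h0 h1 _.
apply: nearW => n.
exact: fixed_n hr hz he (hd0 n) (hd1 n) (h0 n) (h1 n).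
Qed.
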